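(* For any $d\in\mathbb{Z}_{\ge0}$ and $\varepsilon\in(0,1/2)$, there are $\rho_0,\dots,\rho_d\in[0,1-\varepsilon]$ and $c_0,\dots,c_d\in\mathbb{R}$ such that: (1) $\sum_{j=0}^dc_j\rho_j^k=1$ for $k=0,1,\dots,d$; (2) $0\le\sum_{j=0}^dc_j\rho_j^k\le1$ for all integers $k\ge d+1$; (3) $\sum_{j=0}^d|c_j|\le 2^{O(d\sqrt{\varepsilon})}$, where the implied constant is absolute. *)

(* Defs.v *)
From Stdlib Require Export Reals.
Open Scope R_scope.

(* Main.v *)
Require Import Defs.
From Stdlib Require Import Reals Lra Lia.
Open Scope R_scope.


Section S.
Variable rho : nat -> R.

Fixpoint cc (n : nat) (j : nat) : R :=
 match n with
 | O => 1
 | S m => if Nat.leb j m then cc m j * (1 - rho (S m)) / (rho j - rho (S m))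
          else 1 - sum_f_R0 (fun i => cc m i * (1 - rho (S m)) / (rho i - rho (S m))) m
 end.

Definition Phi (n : nat) (f : R -> R) : R := sum_f_R0 (fun j => cc n j * f (rho j)) n.

Lemma sum_lin (u v w : nat -> R) (l m : R) n :
  sum_f_R0 (fun j => u j * (l * v j + m * w j)) n =
  l * sum_f_R0 (fun j => u j * v j) n + m * sum_f_R0 (fun j => u j * w j) n.
Proof. induction n; simpl; [ring|]. rewrite IHn; ring. Qed.

Lemma sum_scal (u : nat -> R) l n :
  sum_f_R0 (fun j => l * u j) n = l * sum_f_R0 u n.
Proof. induction n; simpl; [ring|]. rewrite IHn; ring. Qed.

Lemma Phi_lin n f g l m :
  Phi n (fun x => l * f x + m * g x) = l * Phi n f + m * Phi n g.
Proof. unfold Phi. apply (sum_lin (cc n) (fun j => f (rho j)) (fun j => g (rho j))). Qed.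

Lemma Phi_ext n f g : (forall x, f x = g x) -> Phi n f = Phi n g.
Proof. intros H; unfold Phi; apply sum_eq; intros; rewrite H; auto. Qed.

Lemma Phi_one n : Phi n (fun _ => 1) = 1.
Proof.
  destruct n; unfold Phi. simpl; ring.
  change (sum_f_R0 (fun j => cc (S n) j * 1) n + cc (S n) (S n) * 1 = 1).
  unfold cc at 2; fold cc.
  replace (Nat.leb (S n) n) with false by (symmetry; apply Nat.leb_gt; lia).
  rewrite (sum_eq _ (fun i => cc n i * (1 - rho (S n)) / (rho i - rho (S n)))).
  ring. intros i Hi. simpl. replace (Nat.leb i n) with true. ring.
  symmetry; apply Nat.leb_le; auto.
Qed.

Lemma Phi_shift m g :
  (forall j, (j <= m)%nat -> rho j <> rho (S m)) ->
  Phi (S m) (fun x => (x - rho (S m)) * g x) = (1 - rho (S m)) * Phi m g.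
Proof.
  intros Hd. unfold Phi. simpl sum_f_R0 at 1.
  rewrite Rminus_diag, Rmult_0_l, Rmult_0_r, Rplus_0_r.
  rewrite (sum_eq _ (fun j => (1 - rho (S m)) * (cc m j * g (rho j)))).
  - rewrite sum_scal; ring.
  - intros i Hi. simpl. replace (Nat.leb i m) with true.
    2: symmetry; apply Nat.leb_le; auto.
    field. specialize (Hd i Hi). lra.
Qed.

Fixpoint V (n : nat) (f : R -> R) : Prop :=
  match n with
  | O => forall x y, f x = f y
  | S m => forall a, exists g, V m g /\ forall x, f x = f a + (x - a) * g x
  end.

Lemma V_ext n f g : V n f -> (forall x, f x = g x) -> V n g.
Proof.
  revert f g; induction n; simpl; intros f g Hf H.
  - intros; rewrite <- !H; auto.
  - intros a; destruct (Hf a) as [h [Hh E]]; exists h; split; auto.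
    intros; rewrite <- !H; auto.
Qed.

Lemma V_const n c : V n (fun _ => c).
Proof.
  revert c; induction n; simpl; auto. intros c a; exists (fun _ => 0); split; auto.
  intros; ring.
Qed.

Lemma V_lin n f g l m : V n f -> V n g -> V n (fun x => l * f x + m * g x).
Proof.
  revert f g; induction n; simpl; intros f g Hf Hg.
  - intros; rewrite (Hf x y), (Hg x y); auto.
  - intros a; destruct (Hf a) as [f1 [Hf1 Ef]]; destruct (Hg a) as [g1 [Hg1 Eg]].
    exists (fun x => l * f1 x + m * g1 x); split; auto.
    intros x; rewrite (Ef x), (Eg x); ring.
Qed.

Lemma V_mono n f : V n f -> V (S n) f.
Proof.
  revert f; induction n; intros f Hf.
  - simpl in *. intros a; exists (fun _ => 0); split; auto. intros; rewrite (Hf x a); ring.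
  - intros a; destruct (Hf a) as [g [Hg E]]; exists g; split; auto.
Qed.

Lemma V_mono_le n m f : (n <= m)%nat -> V n f -> V m f.
Proof. induction 1; auto. intros; apply V_mono; auto. Qed.

Lemma V_mul_aff n f al be : V n f -> V (S n) (fun x => (al * x + be) * f x).
Proof.
  revert f; induction n; intros f Hf.
  - intros a; exists (fun _ => al * f a); split. apply V_const.
    intros x; simpl in Hf; rewrite (Hf x a); ring.
  - intros a; destruct (Hf a) as [g [Hg E]].
    exists (fun x => 1 * (al * f a) + 1 * ((al * x + be) * g x)); split.
    + apply V_lin. apply V_const. apply IHn; auto.
    + intros x; rewrite (E x). ring.
Qed.

Lemma Phi_poly n f :
  (forall i j, (i < j <= n)%nat -> rho i <> rho j) ->
  V n f -> Phi n f = f 1.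
Proof.
  revert f; induction n; intros f Hd Hf.
  - unfold Phi; simpl. simpl in Hf. rewrite (Hf 1 (rho 0)). ring.
  - destruct (Hf (rho (S n))) as [g [Hg E]].
    rewrite (Phi_ext _ _ (fun x => f (rho (S n)) * (fun _ => 1) x + 1 * ((x - rho (S n)) * g x))).
    2: intros; rewrite E; ring.
    rewrite Phi_lin, Phi_one, Phi_shift, IHn; auto.
    + rewrite (E 1); ring.
    + intros; apply Hd; lia.
    + intros; apply Hd; lia.
Qed.



Lemma moments n : (forall i j, (i < j <= n)%nat -> rho i <> rho j) ->
  (forall j, (j <= n)%nat -> 0 <= rho j <= 1) ->
  forall k, 0 <= Phi n (fun x => x ^ k) <= 1.
Proof.
  induction n; intros Hd Hr k.
  - unfold Phi; simpl. rewrite Rmult_1_l. destruct (Hr 0%nat (le_n 0)).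
    split. apply pow_le; auto. rewrite <- (pow1 k). apply pow_incr; auto.
  - assert (IH : forall k, 0 <= Phi n (fun x => x ^ k) <= 1).
    { apply IHn; intros; [apply Hd|apply Hr]; lia. }
    destruct (Hr (S n) (le_n _)) as [Ha1 Ha2].
    induction k.
    + change (fun x : R => x ^ 0) with (fun _ : R => 1). rewrite Phi_one; lra.
    + rewrite (Phi_ext _ _ (fun x => rho (S n) * (fun y => y ^ k) x + 1 * ((x - rho (S n)) * (fun y => y ^ k) x))).
      2: intros; simpl; ring.
      rewrite Phi_lin, Phi_shift.
      2: intros; apply Hd; lia.
      specialize (IH k). nra.
Qed.

Fixpoint prodN (m : nat) (x : R) : R :=
  match m with O => x - rho 0 | S m' => prodN m' x * (x - rho (S m')) end.

Lemma V_prodN m : V (S m) (prodN m).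
Proof.
  induction m.
  - apply V_ext with (fun x => (1 * x + - rho 0) * (fun _ => 1) x).
    apply V_mul_aff, V_const. intros; simpl; ring.
  - apply V_ext with (fun x => (1 * x + - rho (S m)) * prodN m x).
    apply V_mul_aff; auto. intros; simpl; ring.
Qed.

Lemma prodN_zero m j : (j <= m)%nat -> prodN m (rho j) = 0.
Proof.
  induction m; intros H; simpl.
  - assert (j = 0%nat) by lia; subst; ring.
  - destruct (Nat.eq_dec j (S m)). subst; ring. rewrite IHm by lia; ring.
Qed.

Lemma prodN_sign m x : (forall i, (i <= m)%nat -> x < rho i) -> 0 < (-1) ^ (S m) * prodN m x.
Proof.
  induction m; intros H; simpl.
  - specialize (H 0%nat (le_n _)); lra.
  - assert (A := IHm (fun i Hi => H i (le_S _ _ Hi))). specialize (H (S m) (le_n _)).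
    simpl in A. replace (-1 * (-1 * (-1) ^ m) * (prodN m x * (x - rho (S m))))
      with ((-1 * (-1) ^ m * prodN m x) * (rho (S m) - x)) by ring.
    apply Rmult_lt_0_compat; lra.
Qed.

Lemma prodN_pos m : (forall i, (i <= m)%nat -> rho i < 1) -> 0 < prodN m 1.
Proof.
  induction m; intros H; simpl.
  - specialize (H 0%nat (le_n _)); lra.
  - apply Rmult_lt_0_compat. apply IHm; auto. specialize (H (S m) (le_n _)); lra.
Qed.

Lemma sgn_sq n : (-1) ^ n * (-1) ^ n = 1.
Proof. induction n; simpl. ring. replace (-1 * (-1) ^ n * (-1 * (-1) ^ n)) with ((-1) ^ n * (-1) ^ n) by ring. auto. Qed.

Lemma cc_sign n : (forall i j, (i < j <= n)%nat -> rho j < rho i) ->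
  (forall j, (j <= n)%nat -> rho j < 1) ->
  forall j, (j <= n)%nat -> 0 <= (-1) ^ j * cc n j.
Proof.
  induction n; intros Hd Hr j Hj.
  - assert (j = 0%nat) by lia; subst; simpl; lra.
  - destruct (Nat.eq_dec j (S n)) as [->|Hne].
    + assert (Hp := Phi_poly (S n) (prodN n)).
      assert (E : Phi (S n) (prodN n) = cc (S n) (S n) * prodN n (rho (S n))).
      { unfold Phi. change (sum_f_R0 (fun j => cc (S n) j * prodN n (rho j)) n + cc (S n) (S n) * prodN n (rho (S n)) = cc (S n) (S n) * prodN n (rho (S n))).
        rewrite sum_eq_R0. ring.
        intros i Hi. rewrite prodN_zero by auto. ring. }
      assert (Hc : cc (S n) (S n) * prodN n (rho (S n)) = prodN n 1).
      { rewrite <- E. apply Hp; [intros i j0 H; specialize (Hd i j0 H); lra|apply V_prodN]. }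
      assert (P1 := prodN_pos n (fun i Hi => Hr i (le_S _ _ Hi))).
      assert (Pa := prodN_sign n (rho (S n)) (fun i Hi => Hd i (S n) (conj (le_n_S _ _ Hi) (le_n _)))).
      assert (Hs := sgn_sq (S n)).
      set (s := (-1) ^ (S n)) in *.
      assert (H : (s * cc (S n) (S n)) * (s * prodN n (rho (S n))) = prodN n 1).
      { rewrite <- Hc. transitivity (cc (S n) (S n) * prodN n (rho (S n)) * (s * s)); [ring|rewrite Hs; ring]. }
      destruct (Rle_lt_dec (s * cc (S n) (S n)) 0); [|lra].
      exfalso. nra.
    + assert (Hjn : (j <= n)%nat) by lia.
      simpl. replace (Nat.leb j n) with true by (symmetry; apply Nat.leb_le; auto).
      assert (IH := IHn (fun i k H => Hd i k (conj (proj1 H) (le_S _ _ (proj2 H)))) (fun k H => Hr k (le_S _ _ H)) j Hjn).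
      assert (rho (S n) < rho j) by (apply Hd; lia).
      assert (rho (S n) < 1) by (apply Hr; lia).
      replace ((-1) ^ j * (cc n j * (1 - rho (S n)) / (rho j - rho (S n))))
        with (((-1) ^ j * cc n j) * ((1 - rho (S n)) / (rho j - rho (S n)))) by (field; lra).
      apply Rmult_le_pos; auto. left; apply Rdiv_lt_0_compat; lra.
Qed.

End S.
Fixpoint T (n : nat) (x : R) {struct n} : R :=
  match n with
  | O => 1
  | S m => match m with O => x | S p => 2 * x * T m x - T p x end
  end.

Lemma T_SS n x : T (S (S n)) x = 2 * x * T (S n) x - T n x.
Proof. reflexivity. Qed.

Lemma V_T al be : forall n, V n (fun x => T n (al * x + be)) /\ V (S n) (fun x => T (S n) (al * x + be)).
Proof.
  induction n as [|n [IH1 IH2]].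
  - split. exact (V_const 0 1).
    apply V_ext with (fun x => (al * x + be) * (fun _ => 1) x). apply V_mul_aff, V_const.
    intros; simpl; ring.
  - split; auto.
    apply V_ext with (fun x => 1 * ((2 * al * x + 2 * be) * T (S n) (al * x + be)) + (-1) * T n (al * x + be)).
    apply V_lin. apply V_mul_aff; auto. apply V_mono, V_mono; auto.
    intros; rewrite T_SS; ring.
Qed.

Lemma T_cos : forall n th, T n (cos th) = cos (INR n * th).
Proof.
  intros n th.
  assert (forall n, T n (cos th) = cos (INR n * th) /\ T (S n) (cos th) = cos (INR (S n) * th)).
  { induction n0 as [|n0 [A B]].
    - simpl. rewrite Rmult_0_l, cos_0, Rmult_1_l. auto.
    - split; auto. rewrite T_SS, A, B.
      replace (INR (S (S n0)) * th) with (INR (S n0) * th + th) by (rewrite !S_INR; ring).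
      replace (INR n0 * th) with (INR (S n0) * th - th) by (rewrite !S_INR; ring).
      rewrite cos_plus, cos_minus. ring. }
  apply H.
Qed.

Lemma cos_npi j : cos (INR j * PI) = (-1) ^ j.
Proof.
  induction j. simpl; rewrite Rmult_0_l, cos_0; auto.
  rewrite S_INR. replace ((INR j + 1) * PI) with (INR j * PI + PI) by ring.
  rewrite neg_cos, IHj. simpl; ring.
Qed.

Lemma T_closed X : 1 <= X -> forall n,
  T n X = ((X + sqrt (X * X - 1)) ^ n + (X - sqrt (X * X - 1)) ^ n) / 2.
Proof.
  intros HX.
  set (q := sqrt (X * X - 1)).
  assert (Hq : q * q = X * X - 1) by (apply sqrt_sqrt; nra).
  assert (forall n, T n X = ((X + q) ^ n + (X - q) ^ n) / 2 /\
                    T (S n) X = ((X + q) ^ S n + (X - q) ^ S n) / 2).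
  { induction n as [|n [A B]].
    - simpl. split; field.
    - split; auto. rewrite T_SS, A, B.
      simpl. apply Rminus_diag_uniq.
      transitivity (((X+q)^n + (X-q)^n) * (X * X - 1 - q * q) / 2). field.
      rewrite Hq. field. }
  apply H.
Qed.

Lemma T_bound X n : 1 <= X -> T n X <= (X + sqrt (X * X - 1)) ^ n.
Proof.
  intros HX. rewrite T_closed by auto.
  set (q := sqrt (X * X - 1)).
  assert (Hq : q * q = X * X - 1) by (apply sqrt_sqrt; nra).
  assert (q0 : 0 <= q) by apply sqrt_pos.
  assert (1 <= X + q) by lra.
  assert (0 <= X - q <= 1) by nra.
  assert ((X - q) ^ n <= 1) by (rewrite <- (pow1 n); apply pow_incr; lra).
  assert (1 <= (X + q) ^ n) by (rewrite <- (pow1 n); apply pow_incr; lra).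
  lra.
Qed.

Lemma exp_pow a n : exp a ^ n = exp (INR n * a).
Proof.
  induction n. simpl. rewrite Rmult_0_l, exp_0; auto.
  simpl pow. rewrite IHn, <- exp_plus, S_INR. f_equal. ring.
Qed.

Lemma V_pow k n : (k <= n)%nat -> V n (fun x => x ^ k).
Proof.
  intros H. apply V_mono_le with k; auto. clear H.
  induction k. exact (V_const 0 1).
  apply V_ext with (fun x => (1 * x + 0) * x ^ k). apply V_mul_aff; auto.
  intros; simpl; ring.
Qed.

Lemma sum_abs_eq (c : nat -> R) (g : nat -> R) d :
  (forall j, (j <= d)%nat -> Rabs (c j) = c j * g j) ->
  sum_f_R0 (fun j => Rabs (c j)) d = sum_f_R0 (fun j => c j * g j) d.
Proof. intros H; apply sum_eq; auto. Qed.

Theorem lemma4p13 :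
  exists C : R, 0 < C /\
  forall (d : nat) (eps : R), 0 < eps < 1/2 ->
  exists rho c : nat -> R,
    (forall j : nat, (j <= d)%nat -> 0 <= rho j <= 1 - eps) /\
    (forall k : nat, (k <= d)%nat ->
        sum_f_R0 (fun j => c j * rho j ^ k) d = 1) /\
    (forall k : nat, (d + 1 <= k)%nat ->
        0 <= sum_f_R0 (fun j => c j * rho j ^ k) d <= 1) /\
    sum_f_R0 (fun j => Rabs (c j)) d <= Rpower 2 (C * INR d * sqrt eps).
Proof.
  assert (Hln : 0 < ln 2).
  { rewrite <- ln_1. apply ln_increasing; lra. }
  exists (8 / ln 2). split. apply Rdiv_lt_0_compat; lra.
  intros d eps [He1 He2].
  set (th := fun j : nat => INR j * PI / INR d).
  set (rho := fun j : nat => (1 - eps) * (1 + cos (th j)) / 2).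
  exists rho, (cc rho d).
  assert (Hth : forall j, (j <= d)%nat -> 0 <= th j <= PI).
  { intros j Hj. unfold th. destruct (Nat.eq_dec d 0) as [->|Hd].
    - assert (j = 0%nat) by lia; subst. simpl. unfold Rdiv; rewrite !Rmult_0_l. split; [lra|apply Rlt_le, PI_RGT_0].
    - assert (0 < INR d) by (apply lt_0_INR; lia).
      assert (INR j <= INR d) by (apply le_INR; auto).
      assert (0 <= INR j) by apply pos_INR.
      assert (PI_pos := PI_RGT_0).
      split. apply Rmult_le_pos; [apply Rmult_le_pos; lra| left; apply Rinv_0_lt_compat; lra].
      apply Rmult_le_reg_r with (INR d); auto. unfold Rdiv. rewrite Rmult_assoc, Rinv_l by lra. nra. }
  assert (Hthlt : forall i j, (i < j <= d)%nat -> th i < th j).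
  { intros i j Hij. unfold th.
    assert (0 < INR d) by (apply lt_0_INR; lia).
    assert (INR i < INR j) by (apply lt_INR; lia).
    assert (PI_pos := PI_RGT_0).
    unfold Rdiv. apply Rmult_lt_compat_r. apply Rinv_0_lt_compat; lra. nra. }
  assert (Hrr : forall j, (j <= d)%nat -> 0 <= rho j <= 1 - eps).
  { intros j Hj. unfold rho. destruct (COS_bound (th j)). split; nra. }
  assert (Hdec : forall i j, (i < j <= d)%nat -> rho j < rho i).
  { intros i j Hij. unfold rho.
    assert (cos (th j) < cos (th i)).
    { apply cos_decreasing_1; try apply Hth; try lia. apply Hthlt; auto. }
    nra. }
  assert (Hdist : forall i j, (i < j <= d)%nat -> rho i <> rho j).
  { intros i j H; specialize (Hdec i j H); lra. }
  split; [auto|]. split; [|split].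
  - intros k Hk. rewrite <- (pow1 k). apply (Phi_poly rho d (fun x => x ^ k)); auto. apply V_pow; auto.
  - intros k Hk. apply (moments rho d); auto.
    intros j Hj; specialize (Hrr j Hj); lra.
  - set (al := 2 / (1 - eps)).
    assert (Hsg := cc_sign rho d (fun i j H => Hdec i j H) (fun j H => ltac:(specialize (Hrr j H); lra))).
    rewrite (sum_abs_eq _ (fun j => T d (al * rho j + -1))).
    2:{ intros j Hj. specialize (Hsg j Hj).
        assert (E : T d (al * rho j + -1) = (-1) ^ j).
        { replace (al * rho j + -1) with (cos (th j)) by (unfold al, rho; field; lra).
          rewrite T_cos. destruct (Nat.eq_dec d 0) as [->|Hd].
          - assert (j = 0%nat) by lia; subst. simpl. rewrite Rmult_0_l, cos_0; auto.
          - unfold th. replace (INR d * (INR j * PI / INR d)) with (INR j * PI).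
            apply cos_npi. field. apply not_0_INR; auto. }
        rewrite E. rewrite <- (Rmult_1_l (Rabs (cc rho d j))), <- (pow_1_abs j), <- Rabs_mult.
        rewrite Rabs_right by lra. ring. }
    change (Phi rho d (fun x => T d (al * x + -1)) <= Rpower 2 (8 / ln 2 * INR d * sqrt eps)).
    rewrite Phi_poly; auto. 2: apply V_T.
    set (X := al * 1 + -1).
    assert (HX : X * (1 - eps) = 1 + eps) by (unfold X, al; field; lra).
    assert (HX1 : 1 <= X) by nra.
    assert (HXa : X - 1 <= 4 * eps) by nra.
    assert (HXb : X + 1 <= 4) by nra.
    assert (Hse := sqrt_pos eps).
    assert (Hse2 := sqrt_sqrt eps (Rlt_le _ _ He1)).
    assert (Hsq : sqrt (X * X - 1) <= 4 * sqrt eps).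
    { rewrite <- (sqrt_square (4 * sqrt eps)) by lra. apply sqrt_le_1_alt. nra. }
    assert (Hes : eps <= sqrt eps) by nra.
    assert (Hr : X + sqrt (X * X - 1) <= exp (8 * sqrt eps)).
    { assert (H8 := exp_ineq1_le (8 * sqrt eps)). lra. }
    eapply Rle_trans. apply T_bound; auto.
    eapply Rle_trans. apply pow_incr. split; [|apply Hr]. assert (H0 := sqrt_pos (X * X - 1)); lra.
    rewrite exp_pow. unfold Rpower. right. f_equal. field. lra.
Qed.
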